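(* Let $R$ be a commutative ring with unit, let $b\in R$, and let $\mathbf B=\begin{pmatrix}1&1&-1\\0&b&0\\0&0&b\end{pmatrix}$. (1) $\mathbf B$ is partition regular over $R$ if and only if $\mathrm{ann}(b)=\{x\in R: xb=0\}$ is infinite. (2) $\mathbf B$ satisfies the generalised columns condition over $R$ if and only if there exists $d\in R$ with $db=0$ and $d^nR$ infinite for all $n\ge0$.
   Context: $\mathbf{B}$ is partition regular over $R$ if for every $r\ge1$ and every map $\chi\colon R\to\{1,\dots,r\}$ there is a nonzero $\mathbf{x}=(x_1,x_2,x_3)^{\intercal}\in R^3$ with $\mathbf{B}\mathbf{x}=0$ and $\chi(x_1)=\chi(x_2)=\chi(x_3)$. Generalised columns condition for a $k\times l$ matrix over $R$ with columns $\mathbf c_1,\dots,\mathbf c_l$: there exist $m\ge0$, a partition $\{1,\dots,l\}=I_0\cup\dots\cup I_m$ and $d_0,\dots,d_m\in R\setminus\{0\}$ with (i) $d_0\sum_{i\in I_0}\mathbf c_i=0$; (ii) for $1\le t\le m$, $d_t\sum_{i\in I_t}\mathbf c_i$ lies in the $R$-submodule generated by the $\mathbf c_j$ with $j\in I_0\cup\dots\cup I_{t-1}$; (iii) if $m>0$, the ideal $d_0(d_1\cdots d_m)^nR$ is infinite for every $n\ge0$. *)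

(* Defs.v *)
From HB Require Import structures.
From mathcomp Require Import all_boot all_order all_algebra.
From mathcomp Require Import boolp classical_sets cardinality.
Set Implicit Arguments. Unset Strict Implicit. Unset Printing Implicit Defensive.
Import GRing.Theory.
Local Open Scope ring_scope.
Local Open Scope classical_set_scope.

(* R : comPzRingType = commutative ring with 1 (the zero ring is allowed). *)

Definition partition_regular (R : comPzRingType) (k l : nat) (A : 'M[R]_(k, l)) : Prop :=
  forall (r : nat), (0 < r)%N -> forall chi : R -> 'I_r,
    exists x : 'cV[R]_l, x != 0 /\ A *m x = 0 /\
      (forall i j : 'I_l, chi (x i 0) = chi (x j 0)).

(* The partition {1..l} = I_0 u ... u I_m is
   given by a surjective map f : 'I_l -> 'I_(m.+1) (I_t = f^-1 t, nonempty);
   the constants are d : 'I_(m.+1) -> R, all nonzero. *)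
Definition gen_columns_condition (R : comPzRingType) (k l : nat) (A : 'M[R]_(k, l)) : Prop :=
  exists (m : nat) (f : 'I_l -> 'I_(m.+1)) (d : 'I_(m.+1) -> R),
    (forall t : 'I_(m.+1), exists i : 'I_l, f i = t) /\
    (forall t : 'I_(m.+1), d t != 0) /\
    d ord0 *: (\sum_(i < l | f i == ord0) col i A) = 0 /\
    (forall t : 'I_(m.+1), (0 < t)%N ->
       exists a : 'I_l -> R,
         d t *: (\sum_(i < l | f i == t) col i A)
           = \sum_(j < l | (f j < t)%N) a j *: col j A) /\
    ((0 < m)%N -> forall n : nat,
       infinite_set (range (fun y : R =>
         d ord0 * (\prod_(t < m.+1 | (0 < t)%N) d t) ^+ n * y))).

Definition Bmat (R : comPzRingType) (b : R) : 'M[R]_3 :=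
  \matrix_(i < 3, j < 3)
    match nat_of_ord i, nat_of_ord j with
    | 0, 0 => 1
    | 0, 1 => 1
    | 0, _ => -1
    | 1, 1 => b
    | 2, 2 => b
    | _, _ => 0
    end.

(* Main.v *)
Require Import Defs.
From HB Require Import structures.
From mathcomp Require Import all_boot all_order all_algebra.
From mathcomp Require Import boolp classical_sets cardinality.
From mathcomp Require Import zify ring.
Set Implicit Arguments. Unset Strict Implicit. Unset Printing Implicit Defensive.
Import GRing.Theory.
Local Open Scope ring_scope.
Local Open Scope classical_set_scope.

Lemma two_pts (T : Type) (Y : set T) : infinite_set Y ->
  exists v u, Y v /\ Y u /\ u <> v.
Proof.
move=> inf; have [v Yv] := infinite_setN0 inf.
have inf' : infinite_set (Y `\ v) by apply: infinite_setD => //; apply: finite_set1.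
have [u [Yu /= nuv]] := infinite_setN0 inf'.
by exists v, u.
Qed.

Lemma schur_inf (R : zmodType) r (chi : R -> 'I_r) n :
  forall (C : {set 'I_r}), (#|C| <= n)%N -> forall Y : set R, infinite_set Y ->
  (forall u w, Y u -> Y w -> u != w -> chi (u - w) \in C) ->
  exists v w u, Y v /\ Y w /\ Y u /\ w != v /\ u != w /\ u != v /\
    chi (w - v) = chi (u - w) /\ chi (u - v) = chi (w - v).
Proof.
elim: n => [|n IH] C hC Y inf hY.
  have C0 : C = finset.set0 by apply: cards0_eq; lia.
  have [v [u [Yv [Yu nuv]]]] := two_pts inf.
  by have := hY u v Yu Yv (introN eqP nuv); rewrite C0 inE.
have [v Yv] := infinite_setN0 inf.
have inf' : infinite_set (Y `\ v) by apply: infinite_setD => //; apply: finite_set1.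
pose X (k : 'I_r) := (Y `\ v) `&` [set u | chi (u - v) = k].
have [[k infX]|Hno] := pselect (exists k, infinite_set (X k)); last first.
  exfalso; apply: inf'.
  apply: (@sub_finite_set _ _ (\bigcup_(k in [set: 'I_r]) X k)).
    by move=> u Yu; exists (chi (u - v)) => //.
  apply: bigcup_finite; first exact: finite_finset.
  by move=> k _; apply: contrapT => h; apply: Hno; exists k.
have [u0 [[Yu0 nu0] /= cu0]] := infinite_setN0 infX.
have kC : k \in C by rewrite -cu0; apply: hY => //; apply/eqP.
have [[w [u [Xw [Xu [nuw cuw]]]]]|Hno] :=
  pselect (exists w u, X k w /\ X k u /\ u != w /\ chi (u - w) = k).
  case: Xw => [[Yw /= nwv] cw]; case: Xu => [[Yu /= nuv] cu].
  exists v, w, u; do 6! (split; first by (done || apply/eqP)).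
  by rewrite /= in cw cu; rewrite cw cu cuw.
have hC' : (#|C :\ k| <= n)%N by move: hC; by rewrite (cardsD1 k C) kC add1n ltnS.
have hX : forall u w, X k u -> X k w -> u != w -> chi (u - w) \in C :\ k.
  move=> u w Xu Xw nuw; rewrite !inE; apply/andP; split.
    apply/eqP => e; apply: Hno; exists w, u; split; [|split; [|split]] => //.
  by apply: hY => //; [case: Xu => [[]] | case: Xw => [[]]].
have [v' [w' [u' [X1 [X2 [X3 H]]]]]] := IH (C :\ k) hC' (X k) infX hX.
exists v', w', u'; split; first by case: X1 => [[]].
split; first by case: X2 => [[]].
split; first by case: X3 => [[]].
exact: H.
Qed.
Definition i0 : 'I_3 := @Ordinal 3 0 isT.
Definition i1 : 'I_3 := @Ordinal 3 1 isT.
Definition i2 : 'I_3 := @Ordinal 3 2 isT.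

Lemma sum3 (V : nmodType) (F : 'I_3 -> V) : \sum_(j < 3) F j = F i0 + F i1 + F i2.
Proof.
rewrite !big_ord_recl big_ord0 addr0 addrA.
by congr (F _ + F _ + F _); apply: val_inj.
Qed.

Lemma Bentry (R : comPzRingType) (b : R) (i j : 'I_3) :
  Bmat b i j = match nat_of_ord i, nat_of_ord j with
    | 0, 0 => 1 | 0, 1 => 1 | 0, _ => -1 | 1, 1 => b | 2, 2 => b | _, _ => 0 end.
Proof. by rewrite mxE. Qed.

Lemma Bmul (R : comPzRingType) (b : R) (x : 'cV[R]_3) :
  Bmat b *m x = 0 <->
  (x i0 0 + x i1 0 - x i2 0 = 0 /\ b * x i1 0 = 0 /\ b * x i2 0 = 0).
Proof.
have E i : (Bmat b *m x) i 0 = Bmat b i i0 * x i0 0 + Bmat b i i1 * x i1 0 + Bmat b i i2 * x i2 0.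
  by rewrite mxE sum3.
split.
  move=> H; have Hi i : (Bmat b *m x) i 0 = 0 by rewrite H mxE.
  have := Hi i0; have := Hi i1; have := Hi i2; rewrite !E !Bentry /=.
  move=> h2 h1 h0; split; [|split].
  - by rewrite -h0; ring.
  - by rewrite -h1; ring.
  - by rewrite -h2; ring.
move=> [h0 [h1 h2]]; apply/matrixP => i j; rewrite (ord1 j) E !Bentry [RHS]mxE.
case: i => [[|[|[|i]]] Hi] //=.
- by rewrite -h0; ring.
- by rewrite !mul0r add0r addr0.
- by rewrite !mul0r !add0r.
Qed.

Lemma colsum_coord (R : comPzRingType) (b c : R) (P : pred 'I_3) k :
  (c *: \sum_(i < 3 | P i) col i (Bmat b)) k 0 =
  c * \sum_(i < 3) (if P i then Bmat b k i else 0).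
Proof.
rewrite mxE summxE big_mkcond; congr (_ * _); apply: eq_bigr => i _.
by case: (P i) => //; rewrite !mxE.
Qed.

Lemma lin_coord (R : comPzRingType) (b : R) (a : 'I_3 -> R) (Q : pred 'I_3) k :
  (\sum_(j < 3 | Q j) a j *: col j (Bmat b)) k 0 =
  \sum_(j < 3) (if Q j then a j * Bmat b k j else 0).
Proof.
rewrite summxE big_mkcond; apply: eq_bigr => i _.
by case: (Q i) => //; rewrite !mxE.
Qed.

Lemma inord_index_inj (T : eqType) (s : seq T) a c : a \in s -> c \in s ->
  (inord (index a s) : 'I_(size s).+1) = inord (index c s) -> a = c.
Proof.
move=> Ha Hc /(congr1 val) /=; rewrite !inordK ?ltnS ?index_size // => e.
by rewrite -(nth_index a Ha) -(nth_index a Hc) e.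
Qed.

Lemma part1 (R : comPzRingType) (b : R) :
  partition_regular (Bmat b) <-> infinite_set [set x : R | x * b = 0].
Proof.
split.
  move=> PR /finite_seqP [s Es].
  have inA y : y * b = 0 -> y \in s.
    by move=> h; have : [set x : R | x * b = 0] y by []; rewrite Es.
  have [x [nx [Bx hc]]] := PR (size s).+1 isT (fun y => inord (index y s)).
  move/Bmul: Bx => [h0 [h1 h2]].
  have A1 : x i1 0 \in s by apply: inA; rewrite mulrC.
  have A2 : x i2 0 \in s by apply: inA; rewrite mulrC.
  have A0 : x i0 0 \in s.
    apply: inA; have -> : x i0 0 = x i2 0 - x i1 0.
      by rewrite -[LHS]subr0 -h0; ring.
    by rewrite mulrBl mulrC h2 mulrC h1 subr0.
  have e01 := inord_index_inj A0 A1 (hc i0 i1).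
  have e21 := inord_index_inj A2 A1 (hc i2 i1).
  have z1 : x i1 0 = 0 by rewrite -h0 e01 e21; ring.
  move/eqP: nx; apply; apply/matrixP => i j; rewrite (ord1 j) [RHS]mxE.
  case: i => [[|[|[|i]]] Hi] //.
  - have -> : Ordinal Hi = i0 by apply: val_inj. by rewrite e01 z1.
  - have -> : Ordinal Hi = i1 by apply: val_inj. by rewrite z1.
  - have -> : Ordinal Hi = i2 by apply: val_inj. by rewrite e21 z1.
move=> inf r _ chi.
have hC : (#|[set: 'I_r]%SET| <= r)%N by rewrite cardsT card_ord.
have [v [w [u [Av [Aw [Au [nwv [nuw [nuv [c1 c2]]]]]]]]]] :=
  @schur_inf _ _ chi r _ hC _ inf (fun _ _ _ _ _ => finset.in_setT _).
pose x : 'cV[R]_3 := \col_(i < 3) nth 0 [:: u - w; w - v; u - v] i.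
have X0 : x i0 0 = u - w by rewrite mxE.
have X1 : x i1 0 = w - v by rewrite mxE.
have X2 : x i2 0 = u - v by rewrite mxE.
exists x; split; [|split].
- apply/eqP => x0; move: nwv; rewrite -subr_eq0 -X1 x0 mxE eqxx //.
- apply/Bmul; rewrite X0 X1 X2; split; first by ring.
  rewrite /= in Av Aw Au.
  by split; rewrite mulrBr ![b * _]mulrC ?Av ?Aw ?Au subrr.
- have H i : chi (x i 0) = chi (w - v).
    case: i => [[|[|[|i]]] Hi] //.
    + have -> : Ordinal Hi = i0 by apply: val_inj. by rewrite X0.
    + have -> : Ordinal Hi = i1 by apply: val_inj. by rewrite X1.
    + have -> : Ordinal Hi = i2 by apply: val_inj. by rewrite X2.
  by move=> i j; rewrite !H.
Qed.

Lemma part2a (R : comPzRingType) (b : R) :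
  gen_columns_condition (Bmat b) ->
  exists d : R, d * b = 0 /\
       forall n : nat, infinite_set (range (fun y : R => d ^+ n * y)).
Proof.
move=> [m [f [d [surj [nz [hi [hii hiii]]]]]]].
have key : exists t : 'I_m.+1, (0 < t)%N /\ d t * b = 0.
  have C (t : 'I_m.+1) (Ht : (0 < t)%N) : exists a : 'I_3 -> R, forall k,
      (d t *: \sum_(i < 3 | f i == t) col i (Bmat b)) k 0 =
      (\sum_(j < 3 | (f j < t)%N) a j *: col j (Bmat b)) k 0.
    by have [a ha] := hii t Ht; exists a => k; rewrite ha.
  have Ci (k : 'I_3) := congr1 (fun M : 'cV[R]_3 => M k 0) hi.
  have [e1|n1] := eqVneq (f i1) ord0; last first.
    have Ht : (0 < f i1)%N by rewrite lt0n.
    have [a ha] := C _ Ht.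
    have := ha i1; rewrite colsum_coord lin_coord !sum3 !Bentry /=.
    rewrite eqxx ltnn !mulr0 !if_same !add0r addr0 => h.
    by exists (f i1).
  have [e2|n2] := eqVneq (f i2) ord0; last first.
    have Ht : (0 < f i2)%N by rewrite lt0n.
    have [a ha] := C _ Ht.
    have := ha i2; rewrite colsum_coord lin_coord !sum3 !Bentry /=.
    rewrite eqxx ltnn !mulr0 !if_same !add0r => h.
    by exists (f i2).
  have [e0|n0] := eqVneq (f i0) ord0.
    have := Ci i0; rewrite /= colsum_coord !sum3 !Bentry /= e0 e1 e2 eqxx mxE.
    have : (d ord0 != 0) := nz ord0.
    by move=> /eqP nd e; exfalso; apply: nd; rewrite -e; ring.
  have Ht : (0 < f i0)%N by rewrite lt0n.
  have ne : (ord0 == f i0) = false by apply/eqP => h; rewrite -h in n0; rewrite eqxx in n0.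
  have [a ha] := C _ Ht.
  have := ha i0; have := ha i1; have := ha i2.
  rewrite !colsum_coord !lin_coord !sum3 !Bentry /= e1 e2 eqxx ltnn ne /= Ht.
  move=> h2 h1 h0; exists (f i0); split => //.
  have A1 : a i1 * b = 0 by move: h1; rewrite !(add0r, addr0, mulr0) => <-.
  have A2 : a i2 * b = 0 by move: h2; rewrite !(add0r, addr0, mulr0) => <-.
  have E : d (f i0) = a i1 - a i2.
    by move: h0; rewrite !(add0r, addr0, mulr1, mulrN1) => ->.
  by rewrite E mulrBl A1 A2 subr0.
have [t [Ht dtb]] := key.
have m0 : (0 < m)%N by move: (ltn_ord t); lia.
exists (d t); split => // n inf.
apply: (hiii m0 n); apply: (sub_finite_set _ inf) => z [y _ <-].
rewrite (bigD1 t) //= exprMn.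
exists (d ord0 * (\prod_(j < m.+1 | (0 < j)%N && (j != t)) d j) ^+ n * y) => //.
ring.
Qed.


Lemma part2b (R : comPzRingType) (b : R) :
  (exists d : R, d * b = 0 /\
       forall n : nat, infinite_set (range (fun y : R => d ^+ n * y))) ->
  gen_columns_condition (Bmat b).
Proof.
move=> [d [db inf]].
have nd : d != 0.
  apply/eqP => d0; apply: (inf 1%N); apply: (sub_finite_set _ (finite_set1 0)).
  by move=> z [y _ <-]; rewrite d0 expr1 mul0r.
pose f (i : 'I_3) : 'I_2 := if i == i0 then ord_max else ord0.
have f0 : f i0 = ord_max by rewrite /f eqxx.
have f1 : f i1 = ord0 by rewrite /f.
have f2 : f i2 = ord0 by rewrite /f.
exists 1%N, f, (fun _ => d); split; [|split; [|split; [|split]]].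
- move=> t; case: t => [[|[|t]] Ht] //.
  + by exists i1; rewrite f1; apply: val_inj.
  + by exists i0; rewrite f0; apply: val_inj.
- by [].
- apply/matrixP => k j; rewrite (ord1 j) colsum_coord sum3 f0 f1 f2 [RHS]mxE /=.
  rewrite !Bentry; case: k => [[|[|[|k]]] Hk] //=; rewrite ?add0r ?addr0.
  + by rewrite subrr mulr0.
  + by rewrite db.
  + by rewrite db.
- move=> t Ht.
  have -> : t = ord_max by apply: val_inj; move: (ltn_ord t) Ht => /=; lia.
  exists (fun j => if j == i1 then d else 0).
  apply/matrixP => k j; rewrite (ord1 j) colsum_coord lin_coord !sum3 f0 f1 f2 /=.
  rewrite !Bentry; case: k => [[|[|[|k]]] Hk] //=; rewrite ?add0r ?addr0 ?mulr0 ?mul0r ?add0r ?addr0 //.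
- move=> _ n.
  have -> : (fun y : R => d * (\prod_(t < 2 | (0 < t)%N) d) ^+ n * y) = (fun y => d ^+ n.+1 * y).
    apply: funext => y; rewrite big_mkcond !big_ord_recl big_ord0 /= mulr1.
    by rewrite exprS mul1r.
  exact: inf.
Qed.

Theorem lemma4p2 (R : comPzRingType) (b : R) :
  (partition_regular (Bmat b) <-> infinite_set [set x : R | x * b = 0]) /\
  (gen_columns_condition (Bmat b) <->
     exists d : R, d * b = 0 /\
       forall n : nat, infinite_set (range (fun y : R => d ^+ n * y))).
Proof.
split; first exact: part1.
split; [exact: part2a | exact: part2b].
Qed.
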